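(* Let $n\ge4$, let $d$ be a distance function on the edges of the complete graph $K_n$, and let $H$ be a Hamiltonian cycle of $K_n$. Then the probability that one application of the vertex-based random solution generation with the matrix $\Pi^H$ outputs a Hamiltonian cycle whose cost is at most the cost of $H$ is $\Omega(1)$.
   Context: The cost of a Hamiltonian cycle is the sum of $d$ over its edges. For a Hamiltonian cycle $H$, $\Pi^H=(\pi_{i,j})$ is the symmetric $n\times n$ matrix with $\pi_{i,i}=0$, $\pi_{i,j}=1-\frac1n$ if $\{i,j\}\in H$ and $\pi_{i,j}=\frac{1}{n(n-2)}$ otherwise. Vertex-based generation from $\Pi$: pick a start vertex uniformly at random; while unvisited vertices remain, from the current vertex $v$ move to an unvisited vertex $v'$ with probability $\pi_{v,v'}/\sum_{j\text{ unvisited}}\pi_{v,j}$; output the resulting Hamiltonian cycle. Asymptotics are as $n\to\infty$, uniformly in $H$ and $d$. *)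

(* Defs.v *)
From HB Require Import structures.
From mathcomp Require Import all_boot all_order all_algebra all_fingroup.
Set Implicit Arguments. Unset Strict Implicit. Unset Printing Implicit Defensive.
Import Order.TTheory GRing.Theory Num.Theory.
Local Open Scope ring_scope.

(* Vertices of K_n are 'I_n; an edge {i,j} is the 2-element set [set i; j]. *)

Definition hc_edges n (s : 'S_n) : {set {set 'I_n}} :=
  [set [set s i; s (ordS i)] | i : 'I_n].

Definition is_hcycle n (H : {set {set 'I_n}}) : Prop :=
  exists s : 'S_n, H = hc_edges s.

Definition cost (R : numDomainType) n (d : {set 'I_n} -> R)
  (H : {set {set 'I_n}}) : R := \sum_(e in H) d e.

Definition PiH (R : fieldType) n (H : {set {set 'I_n}}) (i j : 'I_n) : R :=
  if i == j then 0
  else if [set i; j] \in H then 1 - (n%:R)^-1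
  else ((n * (n - 2))%N%:R)^-1.

Definition visited n (s : 'S_n) (k : 'I_n) : {set 'I_n} :=
  [set s m | m in [pred m : 'I_n | (m <= k)%N]].

(* Probability that vertex-based generation from Pi visits the vertices in
   the order s 0, s 1, ..., s (n-1): uniform start, then at step k move from
   s k to s (k+1) with probability Pi(s k, s(k+1)) / sum_{j unvisited} Pi(s k, j). *)
Definition gen_prob (R : fieldType) n (Pi : 'I_n -> 'I_n -> R) (s : 'S_n) : R :=
  (n%:R)^-1 *
  \prod_(k : 'I_n | (k.+1 < n)%N)
     (Pi (s k) (s (ordS k)) / \sum_(j in ~: visited s k) Pi (s k) j).

Definition good_prob (R : realFieldType) n (d : {set 'I_n} -> R)
  (H : {set {set 'I_n}}) : R :=
  \sum_(s : 'S_n | cost d (hc_edges s) <= cost d H) gen_prob (@PiH R n H) s.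

(* Main.v *)
Require Import Defs.
From HB Require Import structures.
From mathcomp Require Import all_boot all_order all_algebra all_fingroup.
From mathcomp Require Import zify ring lra.
Import Order.TTheory GRing.Theory Num.Theory.
Local Open Scope ring_scope.

Lemma weier (R : realFieldType) (I : Type) (r : seq I) (P : pred I) (z : I -> R) :
  (forall i, P i -> 0 <= z i <= 1) ->
  1 - \sum_(i <- r | P i) z i <= \prod_(i <- r | P i) (1 - z i).
Proof.
move=> hz; elim: r => [|a r IH]; first by rewrite !big_nil subr0.
rewrite !big_cons; case: ifP => Pa //.
have /andP[z0 z1] := hz a Pa.
have S0 : 0 <= \sum_(i <- r | P i) z i by apply: sumr_ge0 => i /hz /andP[].
have P0 : 0 <= \prod_(i <- r | P i) (1 - z i).
  by apply: prodr_ge0 => i /hz /andP[_ ?]; rewrite subr_ge0.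
nra.
Qed.

Lemma sum_ite (R : numDomainType) (T : finType) (P : pred T) (a : T) (c : R) :
  0 <= c -> \sum_(j | P j) (if j == a then c else 0) <= c.
Proof.
move=> c0; rewrite big_mkcond (bigD1 a) //= eqxx big1 ?addr0.
  by case: (P a).
by move=> j /negbTE ->; case: (P j).
Qed.

Lemma card_vis n (s : 'S_n) (k : 'I_n) : (#|~: visited s k| <= n - k.+1)%N.
Proof.
have Hk : (k.+1 <= n)%N by apply: ltn_ord.
have W : (k.+1 <= #|visited s k|)%N.
  rewrite /visited card_imset; last exact: perm_inj.
  have -> : k.+1 = #|[set widen_ord Hk i | i : 'I_k.+1]|.
    by rewrite card_imset ?card_ord // => a b /(congr1 val) /= /val_inj.
  apply: subset_leq_card; apply/subsetP => x /imsetP [i _ ->].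
  by rewrite inE /= -ltnS ltn_ord.
have := cardsC (visited s k); rewrite card_ord; lia.
Qed.

Lemma edge_char n (s : 'S_n) (k : 'I_n) (j : 'I_n) :
  (k.+1 < n)%N -> j \notin visited s k -> [set s k; j] \in hc_edges s ->
  j = s (ordS k) \/ (val k = 0%N /\ val (s^-1%g j) = n.-1).
Proof.
move=> kn jv /imsetP [i _ E].
set m := (s^-1)%g j.
have jm : j = s m by rewrite /m permKV.
have mk : (k < m)%N.
  move: jv; rewrite jm /visited mem_imset; last exact: perm_inj.
  by rewrite inE /= -ltnNge.
have A : s k \in [set s i; s (ordS i)] by rewrite -E set21.
have B : s m \in [set s i; s (ordS i)] by rewrite -E jm set22.
rewrite !inE !(inj_eq perm_inj) in A B.
case/orP: A => /eqP A.
  subst i; case/orP: B => /eqP B.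
    by move: mk; rewrite -B ltnn.
  by left; rewrite jm B.
case/orP: B => /eqP B.
  subst i. right. have := congr1 val A; rewrite /= => Ak.
  have mn : (m < n)%N by apply: ltn_ord.
  case: (ltnP m.+1 n) => h.
    by rewrite modn_small // in Ak; lia.
  have mn1 : m.+1 = n by lia.
  by move: Ak; rewrite mn1 modnn => ->; split => //; lia.
by move: mk; rewrite B -A ltnn.
Qed.

Lemma step (R : realFieldType) n (s : 'S_n) (k : 'I_n) : (3 <= n)%N -> (k.+1 < n)%N ->
  let c : R := 1 - (n%:R)^-1 in let e : R := ((n * (n - 2))%N%:R)^-1 in
  let D := \sum_(j in ~: visited s k) PiH R (hc_edges s) (s k) j in
  [/\ PiH R (hc_edges s) (s k) (s (ordS k)) = c, 0 < D &
   D <= c + (if val k == 0%N then c else 0) + (n - k.+1)%:R * e].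
Proof.
move=> n3 kn c e D.
have n0 : (0 : R) < n%:R by rewrite ltr0n; lia.
have c0 : 0 < c.
  rewrite /c subr_gt0 invf_lt1 // ltr1n; lia.
have e0 : 0 < e by rewrite /e invr_gt0 ltr0n; nia.
have Pi0 : forall a b, 0 <= PiH R (hc_edges s) a b.
  move=> a b; rewrite /PiH; case: ifP => _ //; case: ifP => _; exact: ltW.
have kS : ordS k != k by apply/eqP => /(congr1 val) /=; rewrite modn_small //; lia.
have Pc : PiH R (hc_edges s) (s k) (s (ordS k)) = c.
  rewrite /PiH (inj_eq perm_inj) eq_sym (negbTE kS).
  by rewrite (imset_f (fun i => [set s i; s (ordS i)])).
have U1 : s (ordS k) \in ~: visited s k.
  rewrite inE /visited mem_imset; last exact: perm_inj.
  by rewrite inE /= -ltnNge /= modn_small.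
have PiE : forall a b, PiH R (hc_edges s) a b =
   if a == b then 0 else if [set a; b] \in hc_edges s then c else e by [].
clearbody c e. split => //.
  rewrite /D (bigD1 (s (ordS k))) //= Pc.
  have : 0 <= \sum_(i in ~: visited s k | i != s (ordS k)) PiH R (hc_edges s) (s k) i.
    by apply: sumr_ge0 => j _; exact: Pi0.
  move=> h; lra.
have ln : (n.-1 < n)%N by lia.
set lst := Ordinal ln.
set t : R := if val k == 0%N then c else 0.
have t0 : 0 <= t by rewrite /t; case: ifP => _ //; exact: ltW.
apply: (@le_trans _ _ (\sum_(j in ~: visited s k)
   (e + (if j == s (ordS k) then c else 0) + (if j == s lst then t else 0)))).
  apply: ler_sum => j jU.
  have Ha : 0 <= (if j == s (ordS k) then c else 0) by case: ifP => _ //; exact: ltW.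
  have Hb : 0 <= (if j == s lst then t else 0) by case: ifP => _ //.
  rewrite PiE; case: ifP => _. 
    by rewrite !addr_ge0 // ltW.
  case: ifP => hE; last lra.
  have jU' : j \notin visited s k by rewrite inE in jU.
  case: (@edge_char n s k j kn jU' hE) => [jE | [k0 jl]].
    rewrite jE eqxx in Hb *; lra.
  have -> : j == s lst.
    by apply/eqP; rewrite -[j](permKV s); congr (s _); apply: val_inj.
  rewrite /t k0 eqxx /=; lra.
rewrite !big_split /= sumr_const.
have S1 := @sum_ite R _ (fun j => j \in ~: visited s k) (s (ordS k)) c (ltW c0).
have S2 := @sum_ite R _ (fun j => j \in ~: visited s k) (s lst) t t0.
have S3 : e *+ #|~: visited s k| <= (n - k.+1)%:R * e.
  rewrite -[e *+ _]mulr_natl; apply: ler_wpM2r; [exact: ltW | rewrite ler_nat; exact: (@card_vis n s k)].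
rewrite /t in S2 *; lra.
Qed.

Lemma tri_sum n : ((\sum_(k < n) (n - k.+1)) * 2 = n * n.-1)%N.
Proof.
elim: n => [|n IH]; first by rewrite big_ord0.
rewrite big_ord_recl /=.
have -> : (\sum_(i < n) (n.+1 - (bump 0 i).+1) = \sum_(i < n) (n - i.+1))%N.
  by apply: eq_bigr => i _; rewrite /bump /= add1n subSS.
rewrite mulnDl IH subn1 /=; case: n {IH} => [|n] //=; lia.
Qed.

Lemma gen_lb (R : realFieldType) n (s : 'S_n) : (8 <= n)%N ->
  (n%:R^-1 / 9 : R) <= gen_prob (PiH R (hc_edges s)) s.
Proof.
move=> n8.
set c : R := 1 - (n%:R)^-1. set e : R := ((n * (n - 2))%N%:R)^-1.
set Q : R := ((n.-1 * (n - 2))%N%:R).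
have x0 : (0 : R) < n%:R by rewrite ltr0n; lia.
have Q0 : 0 < Q by rewrite /Q ltr0n; nia.
have c0 : 0 < c by rewrite /c subr_gt0 invf_lt1 // ltr1n; lia.
have qE : e / c = Q^-1.
  rewrite /e /c /Q !natrM !natrB; try lia.
  rewrite -subn1 natrB; last lia.
  field.
  have x8 : (8 : R) <= n%:R by rewrite (ler_nat R 8 n).
  by apply/and3P; split; rewrite gt_eqF //; lra.
have eE : e = c / Q by rewrite -qE mulrC -mulrA mulVf ?mulr1 // gt_eqF.
have n3 : (3 <= n)%N by lia.
set w := fun k : 'I_n => (n - k.+1)%:R / Q.
have w01 : forall k, 0 <= w k <= 1.
  move=> k; apply/andP; split; first by rewrite /w divr_ge0 // ltW.
  rewrite /w ler_pdivrMr // mul1r /Q ler_nat; nia.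
set g := fun k : 'I_n => if val k == 0%N then 3^-1 else 1 - w k.
rewrite /gen_prob ler_pM2l ?invr_gt0 //.
apply: (@le_trans _ _ (\prod_(k : 'I_n | (k.+1 < n)%N) g k)).
  2: {
  apply: ler_prod => k kn.
  have [Pc D0 DB] := @step R n s k n3 kn.
  rewrite -/c -/e in Pc DB.
  rewrite Pc.
  set D := \sum_(j in _) _ in D0 DB *.
  set t' : R := if val k == 0%N then 1 else 0.
  have t0 : 0 <= t' by rewrite /t'; case: ifP.
  have /andP[wk0 wk1] := w01 k.
  have yp : 0 < 1 + t' + w k by lra.
  have BE : c + (if val k == 0%N then c else 0) + (n - k.+1)%:R * e = c * (1 + t' + w k).
    by rewrite eE /w /t'; case: ifP => _; ring.
  have fb : (1 + t' + w k)^-1 <= c / D.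
    have -> : (1 + t' + w k)^-1 = c / (c * (1 + t' + w k)).
      by rewrite invfM mulrA divff ?mul1r // gt_eqF.
    rewrite ler_pM2l // lef_pV2 ?posrE -?BE //.
    by rewrite BE mulr_gt0.
  apply/andP; split.
    by rewrite /g; case: ifP => _; [rewrite invr_ge0; lra | lra].
  apply: le_trans fb.
  rewrite /g /t'; case: ifP => _.
    rewrite lef_pV2 ?posrE; lra.
  rewrite addr0 -[(1 + w k)^-1]mul1r ler_pdivlMr //; nra.
  }
have n0 : (0 < n)%N by lia.
set k0 : 'I_n := Ordinal n0.
rewrite (bigD1 k0) /=; last lia.
rewrite {1}/g /= .
have -> : \prod_(i < n | (i.+1 < n)%N && (i != k0)) g i =
          \prod_(i < n | (i.+1 < n)%N && (i != k0)) (1 - w i).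
  apply: eq_bigr => i /andP[_ ik]; rewrite /g.
  case: eqP => // h; case/eqP: ik; exact: val_inj.
have W := @weier R _ (index_enum 'I_n) (fun i : 'I_n => (i.+1 < n)%N && (i != k0)) w
  (fun i _ => w01 i).
have S1 : \sum_(i < n | (i.+1 < n)%N && (i != k0)) w i <= \sum_(i < n) w i.
  rewrite [X in _ <= X](bigID (fun i : 'I_n => (i.+1 < n)%N && (i != k0))) /= lerDl.
  by apply: sumr_ge0 => i _; have /andP[] := w01 i.
have S2 : \sum_(i < n) w i <= 2 / 3.
  rewrite /w -mulr_suml -natr_sum ler_pdivrMr //.
  have T := tri_sum n.
  have : ((\sum_(k < n) (n - k.+1)) * 3 <= 2 * (n.-1 * (n - 2)))%N by nia.
  rewrite -(ler_nat R) natrM [X in _ <= X]natrM /Q => h.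
  lra.
have P0 : 0 <= \prod_(i < n | (i.+1 < n)%N && (i != k0)) (1 - w i).
  by apply: prodr_ge0 => i _; have /andP[_ ?] := w01 i; lra.
nra.
Qed.

Definition rotf n (n0 : (0 < n)%N) (r i : 'I_n) : 'I_n := Ordinal (@ltn_pmod (i + r) n n0).

Arguments rotf {n}.
Lemma rotf_inj n (n0 : (0 < n)%N) (r : 'I_n) : injective (rotf n0 r).
Proof.
move=> a b /(congr1 val) /= h; apply: val_inj => /=.
move: h; rewrite -!(modnDmr a r) -!(modnDmr b r) => /eqP.
rewrite eqn_modDr => /eqP; rewrite !modn_small //.
Qed.

Arguments rotf_inj {n}.
Definition rot n (n0 : (0 < n)%N) (r : 'I_n) : 'S_n := perm (rotf_inj n0 r).

Arguments rot {n}.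
Lemma rot_ordS n (n0 : (0 < n)%N) (r i : 'I_n) : rot n0 r (ordS i) = ordS (rot n0 r i).
Proof.
apply: val_inj; rewrite /rot !permE /=.
by rewrite modnDml -[((i + r) %% n).+1]addn1 modnDml addnAC addn1.
Qed.

Lemma hc_rot n (n0 : (0 < n)%N) (r : 'I_n) (s : 'S_n) :
  hc_edges (rot n0 r * s)%g = hc_edges s.
Proof.
apply/setP => E; apply/imsetP/imsetP => [[i _ ->]|[i _ ->]].
  by exists (rot n0 r i) => //; rewrite !permM rot_ordS.
exists ((rot n0 r)^-1 i)%g => //; rewrite !permM rot_ordS !permKV //.
Qed.

Lemma rot_inj n (n0 : (0 < n)%N) (s : 'S_n) : injective (fun r => (rot n0 r * s)%g).
Proof.
move=> a b /= /(congr1 (fun p : 'S_n => p (Ordinal n0))); rewrite !permM.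
move/perm_inj; rewrite /rot !permE => /(congr1 val) /=.
by rewrite !add0n !modn_small // => /val_inj.
Qed.

Lemma gen_ge0 (R : realFieldType) n (H : {set {set 'I_n}}) s : (2 <= n)%N ->
  0 <= gen_prob (PiH R H) s.
Proof.
move=> n2.
have Pi0 : forall a b, 0 <= PiH R H a b.
  move=> a b; rewrite /PiH; case: ifP => _ //; case: ifP => _; last by rewrite invr_ge0 ler0n.
  rewrite subr_ge0 invf_le1 ?ltr0n ?ler1n //; lia.
rewrite /gen_prob mulr_ge0 ?invr_ge0 ?ler0n //.
apply: prodr_ge0 => k _; apply: divr_ge0 => //; apply: sumr_ge0 => j _; exact: Pi0.
Qed.

Theorem claim2 (R : realFieldType) :
  exists c : R, 0 < c /\
  exists N : nat, forall n : nat, (4 <= n)%N -> (N <= n)%N ->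
    forall (d : {set 'I_n} -> R) (H : {set {set 'I_n}}),
      is_hcycle H -> c <= good_prob d H.
Proof.
exists 9^-1; split; first by rewrite invr_gt0.
exists 8%N => n _ n8 d H [s0 HE].
have n0 : (0 < n)%N by lia.
set F := fun s => gen_prob (PiH R H) s.
set Img := [set (rot n0 r * s0)%g | r : 'I_n].
apply: (@le_trans _ _ (\sum_(s in Img) F s)).
  rewrite big_imset /=; last by move=> a b _ _; apply: rot_inj.
  apply: (@le_trans _ _ (\sum_(r : 'I_n) (n%:R^-1 / 9))).
    rewrite sumr_const card_ord -[_ *+ n]mulr_natl mulrA mulfV ?mul1r //.
    by rewrite gt_eqF // ltr0n.
  apply: ler_sum => r _; rewrite /F HE -(@hc_rot n n0 r s0).
  exact: gen_lb.
rewrite /good_prob big_mkcond [X in _ <= X]big_mkcond /=.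
apply: ler_sum => s _.
case: ifP => sI.
  have -> : cost d (hc_edges s) <= cost d H.
    by case/imsetP: sI => r _ ->; rewrite hc_rot HE.
  by [].
case: ifP => _ //; apply: gen_ge0; lia.
Qed.
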